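(* Let $M$ be a point-line configuration of rank $3$ on $[d]$, and let $x,x_1,\dots,x_n$ be $3$-element subsets of $[d]$ not belonging to $\mathcal{C}_3(M)$. (i) If $N$ is a point-line configuration on $[d]$ with $N\ge M$, then $N\ge M^x$ if and only if $x\in\mathcal{C}_3(N)$. (ii) Suppose that $x_{i+1}\in\mathcal{C}_3(M^{x_i})$ for every $i\in[n]$, where $x_{n+1}:=x_1$, and that every $y\in\mathcal{C}_3(M^{x_n})$ belongs to $\mathcal{C}_3(M)\cup\{x_1,\dots,x_n\}$. Then $M^{x_n}$ is a minimal element (for the dependency order) of the set $\mathcal{B}=\{N \text{ matroid on }[d]: N>M,\ \mathcal{C}_1(N)=\emptyset,\ \mathcal{C}_2(N)=\emptyset\}$.
   Context: A matroid $N$ on $[d]$ has dependent sets $\mathcal{D}(N)$ and circuits $\mathcal{C}(N)$; $\mathcal{C}_i(N)$ is the set of circuits of size $i$. A point-line configuration on $[d]$ is a simple matroid (no circuits of size $1$ or $2$) of rank at most $3$; its lines are the maximal subsets of size $\ge3$ and rank $2$, and a $3$-subset is dependent (equivalently a circuit) iff it lies in a line. Dependency order: $N_1\le N_2$ iff $\mathcal{D}(N_1)\subseteq\mathcal{D}(N_2)$; $N_1<N_2$ iff moreover $N_1\neq N_2$. For a $3$-subset $x\notin\mathcal{C}_3(M)$, $M^x$ denotes the unique minimal (for the dependency order) point-line configuration on $[d]$ in which every $3$-subset of every line of $M$ is dependent and $x$ is dependent. *)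

(* Defs.v *)
(* A matroid on [d] = 'I_d is represented by its family of
   independent sets I : {set {set 'I_d}} satisfying the independence axioms. *)
From mathcomp Require Import all_boot all_order.
Set Implicit Arguments. Unset Strict Implicit. Unset Printing Implicit Defensive.

Section Matroids.
Variable d : nat.
Notation E := 'I_d.
Notation family := {set {set E}}.

Definition is_matroid (I : family) : bool :=
  [&& set0 \in I,
      [forall A : {set E}, forall B : {set E},
         ((A \in I) && (B \subset A)) ==> (B \in I)] &
      [forall A : {set E}, forall B : {set E},
         [&& A \in I, B \in I & #|A| < #|B|] ==>
         [exists e in B :\: A, e |: A \in I]]].

Definition dependent (I : family) (A : {set E}) : bool := A \notin I.
Definition deps (I : family) : family := [set A | dependent I A].

Definition circuit (I : family) (C : {set E}) : bool :=
  dependent I C && [forall B : {set E}, (B \proper C) ==> (B \in I)].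

Definition circuits_k (I : family) (k : nat) : family :=
  [set C | circuit I C & #|C| == k].

Definition rk (I : family) (A : {set E}) : nat :=
  \max_(B in I | B \subset A) #|B|.

Definition mrank (I : family) : nat := rk I setT.

Definition plc (I : family) : bool :=
  [&& is_matroid I, circuits_k I 1 == set0, circuits_k I 2 == set0
    & mrank I <= 3].

Definition is_line (I : family) (L : {set E}) : bool :=
  [&& 3 <= #|L|, rk I L == 2 &
      [forall L' : {set E}, ((L \proper L') && (3 <= #|L'|)) ==> (rk I L' != 2)]].

Definition dle (I1 I2 : family) : bool := deps I1 \subset deps I2.
Definition dlt (I1 I2 : family) : bool := dle I1 I2 && (I1 != I2).

Definition Mx_cond (M : family) (x : {set E}) (N : family) : bool :=
  [&& plc N,
      [forall L : {set E}, forall T : {set E},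
         [&& is_line M L, T \subset L & #|T| == 3] ==> dependent N T]
    & dependent N x].

Definition Mx_minimal (M : family) (x : {set E}) (N : family) : bool :=
  Mx_cond M x N &&
  [forall N' : family, (Mx_cond M x N' && dle N' N) ==> (N' == N)].

Definition Mx_spec (M : family) (x : {set E}) (N : family) : bool :=
  Mx_minimal M x N &&
  [forall N' : family, Mx_minimal M x N' ==> (N' == N)].

(* M^x : the unique minimal point-line configuration as above
   (defaults to M if no such unique minimal element exists). *)
Definition Mx (M : family) (x : {set E}) : family :=
  if [pick N | Mx_spec M x N] is Some N then N else M.

Definition in_B (M N : family) : bool :=
  [&& is_matroid N, dlt M N, circuits_k N 1 == set0 & circuits_k N 2 == set0].

End Matroids.

(* Main.v *)
Require Import Defs.
From mathcomp Require Import all_boot all_order.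
Set Implicit Arguments. Unset Strict Implicit. Unset Printing Implicit Defensive.

Section S.
Variable d : nat.
Implicit Types (I N M : {set {set 'I_d}}) (A B C T L x : {set 'I_d}).

Lemma matroidP I : is_matroid I ->
  [/\ set0 \in I, (forall A B, A \in I -> B \subset A -> B \in I) &
      (forall A B, A \in I -> B \in I -> #|A| < #|B| ->
         exists2 e, e \in B :\: A & e |: A \in I)].
Proof.
case/and3P=> h0 /forallP h1 /forallP h2; split=> // A B hA hB.
  by move: (forallP (h1 A) B); rewrite hA hB.
move=> hlt; move: (forallP (h2 A) B); rewrite hA hB hlt /= => /exists_inP[e he heA].
by exists e.
Qed.

Lemma matroidI I : set0 \in I -> (forall A B, A \in I -> B \subset A -> B \in I) ->
      (forall A B, A \in I -> B \in I -> #|A| < #|B| ->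
         exists2 e, e \in B :\: A & e |: A \in I) -> is_matroid I.
Proof.
move=> h0 h1 h2; apply/and3P; split=> //.
  apply/forallP=> A; apply/forallP=> B; apply/implyP=> /andP[hA hB]; exact: h1 hA hB.
apply/forallP=> A; apply/forallP=> B; apply/implyP=> /and3P[hA hB hlt].
by case: (h2 A B hA hB hlt)=> e he heA; apply/exists_inP; exists e.
Qed.

Lemma plcP N : plc N -> [/\ is_matroid N, circuits_k N 1 = set0,
   circuits_k N 2 = set0 & mrank N <= 3].
Proof. by case/and4P=> h1 /eqP h2 /eqP h3 h4. Qed.

Lemma small_in N A : plc N -> #|A| <= 2 -> A \in N.
Proof.
case/plcP=> /matroidP[h0 h1 _] c1 c2 _.
suff H : forall n A, #|A| <= n -> n <= 2 -> A \in N by move=> hA; exact: H hA _.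
elim=> [|n IH] {}A hA hn.
  by move: hA; rewrite leqn0 cards_eq0 => /eqP ->.
case: (leqP #|A| n) => hAn; first by apply: IH => //; exact: ltnW.
have eA : #|A| = n.+1 by apply/eqP; rewrite eqn_leq hA hAn.
apply/negPn/negP => hN.
have hc : circuit N A.
  apply/andP; split; first exact: hN.
  apply/forallP=> B; apply/implyP=> hB; apply: IH; last exact: ltnW.
  by have := proper_card hB; rewrite eA ltnS.
move: hn eA; case: n {IH hA hAn} => [|[|n]] hn eA //.
- by move: c1 => /setP /(_ A); rewrite !inE hc eA.
- by move: c2 => /setP /(_ A); rewrite !inE hc eA.
Qed.

Lemma big_out N A : plc N -> A \in N -> #|A| <= 3.
Proof.
case/plcP=> _ _ _ hr hA; apply: leq_trans hr; rewrite /mrank /rk.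
by apply: (leq_bigmax_cond (F := fun B => #|B|)); rewrite hA subsetT.
Qed.

Lemma no_small_circuits I k : (forall A, #|A| <= 2 -> A \in I) -> k <= 2 ->
  circuits_k I k == set0.
Proof.
move=> hs hk; apply/eqP/setP=> C; rewrite !inE; apply/negP => /andP[/andP[hC _] /eqP eC].
by move: hC; rewrite /dependent hs ?eC.
Qed.

Lemma plcU N1 N2 : plc N1 -> plc N2 -> plc (N1 :|: N2).
Proof.
move=> p1 p2.
have s1 := small_in (A := _) p1.
have s2 := small_in (A := _) p2.
case/plcP: (p1) => /matroidP[h01 h11 h21] _ _ _.
case/plcP: (p2) => /matroidP[h02 h12 h22] _ _ _.
have hs : forall A, #|A| <= 2 -> A \in N1 :|: N2 by move=> A hA; rewrite inE s1.
apply/and4P; split.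
- apply: matroidI; first by rewrite inE h01.
  + move=> A B; rewrite !inE => /orP[hA|hA] hB.
      by rewrite (h11 A).
    by rewrite (h12 A) ?orbT.
  + move=> A B; rewrite !inE => hA hB hlt.
    case/orP: hB => hB.
    * have hA1 : A \in N1.
        case/orP: hA => // _; apply: s1; rewrite -ltnS.
        exact: leq_trans hlt (big_out p1 hB).
      by case: (h21 A B hA1 hB hlt) => e he heA; exists e; rewrite // inE heA.
    * have hA2 : A \in N2.
        case/orP: hA => // _; apply: s2; rewrite -ltnS.
        exact: leq_trans hlt (big_out p2 hB).
      by case: (h22 A B hA2 hB hlt) => e he heA; exists e; rewrite // inE heA orbT.
- exact: no_small_circuits.
- exact: no_small_circuits.
- rewrite /mrank /rk; apply/bigmax_leqP => B /andP[]; rewrite inE => /orP[] hB _.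
    exact: big_out p1 hB.
  exact: big_out p2 hB.
Qed.

Lemma condU M x N1 N2 : Mx_cond M x N1 -> Mx_cond M x N2 -> Mx_cond M x (N1 :|: N2).
Proof.
case/and3P=> p1 /forallP l1 d1; case/and3P=> p2 /forallP l2 d2.
apply/and3P; split; first exact: plcU.
  apply/forallP=> L; apply/forallP=> T; apply/implyP=> h.
  move: (forallP (l1 L) T) (forallP (l2 L) T); rewrite h /= /dependent !inE.
  by move=> /negbTE -> /negbTE ->.
by move: d1 d2; rewrite /dependent !inE => /negbTE -> /negbTE ->.
Qed.

Lemma min_least M x m N : Mx_minimal M x m -> Mx_cond M x N -> dle m N.
Proof.
case/andP=> hm /forallP hmin hN.
have hd : dle (m :|: N) m.
  by apply/subsetP=> A; rewrite !inE /dependent inE negb_or => /andP[].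
move: (hmin (m :|: N)); rewrite condU // hd /= => /eqP/setUidPl hsub.
apply/subsetP=> A; rewrite !inE /dependent; apply: contra => hA.
exact: (subsetP hsub).
Qed.

Definition U2 := [set A : {set 'I_d} | #|A| <= 2].

Lemma plcU2 : plc U2.
Proof.
have hs : forall A, #|A| <= 2 -> A \in U2 by move=> A; rewrite inE.
apply/and4P; split.
- apply: matroidI; first by rewrite inE cards0.
  + by move=> A B; rewrite !inE => hA hB; apply: leq_trans (subset_leq_card hB) hA.
  + move=> A B; rewrite !inE => hA hB hlt.
    have : B :\: A != set0.
      apply/negP; rewrite setD_eq0 => hBA.
      by have := subset_leq_card hBA; rewrite leqNgt hlt.
    case/set0Pn => e he; exists e => //.
    move: he; rewrite !inE => /andP[heA _].
    by rewrite cardsU1 heA add1n; apply: leq_trans hlt hB.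
- exact: no_small_circuits.
- exact: no_small_circuits.
- rewrite /mrank /rk; apply/bigmax_leqP => B /andP[]; rewrite inE => hB _.
  exact: leq_trans hB _.
Qed.

Lemma condU2 M x : 2 < #|x| -> Mx_cond M x U2.
Proof.
move=> hx; apply/and3P; split; [exact: plcU2 | | by rewrite /dependent inE -ltnNge].
apply/forallP=> L; apply/forallP=> T; apply/implyP=> /and3P[_ _ /eqP hT].
by rewrite /dependent inE hT.
Qed.

Lemma MxP M x : 2 < #|x| ->
  Mx_cond M x (Mx M x) /\ (forall N, Mx_cond M x N -> dle (Mx M x) N).
Proof.
move=> hx.
have hex : exists m, Mx_minimal M x m.
  case: (arg_minnP (fun N => #|deps N|) (condU2 M hx)) => m hm hmin.
  exists m; apply/andP; split=> //; apply/forallP=> N'; apply/implyP=> /andP[hN' hle].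
  have e : deps N' = deps m.
    by apply/eqP; rewrite eqEcard (hle : deps N' \subset deps m) /=; exact: hmin.
  apply/eqP/setP=> A; move/setP: e => /(_ A); rewrite !inE /dependent.
  by case: (A \in N'); case: (A \in m).
case: hex => m hm.
have spec : Mx_spec M x m.
  apply/andP; split=> //; apply/forallP=> N'; apply/implyP=> hN'.
  case/andP: (hN') => hc' /forallP hmin'.
  have := hmin' m; rewrite (min_least hm hc') (andP hm).1 /= eq_sym; exact.
rewrite /Mx; case: pickP => [N /andP[hN _] | /(_ m)]; last by rewrite spec.
split; first by case/andP: hN.
move=> N'; exact: min_least.
Qed.

Lemma circ3 N A : plc N -> #|A| = 3 -> dependent N A -> A \in circuits_k N 3.
Proof.
move=> p hA hd; rewrite inE hA eqxx andbT; apply/andP; split=> //.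
apply/forallP=> B; apply/implyP=> hB; apply: small_in p _.
by have := proper_card hB; rewrite hA ltnS.
Qed.

Lemma circ_dep N A : A \in circuits_k N 3 -> dependent N A /\ #|A| = 3.
Proof. by rewrite inE => /andP[/andP[h _] /eqP e]. Qed.

Lemma line_dep M L T : is_line M L -> T \subset L -> #|T| = 3 -> dependent M T.
Proof.
case/and3P=> _ /eqP hr _ hT h3; rewrite /dependent; apply/negP=> hTM.
have : #|T| <= rk M L.
  by rewrite /rk; apply: (leq_bigmax_cond (F:=fun B => #|B|)); rewrite hTM hT.
by rewrite hr h3.
Qed.

Lemma line_exists M A : plc M -> #|A| = 3 -> A \notin M ->
  exists L, is_line M L && (A \subset L).
Proof.
move=> pM hA hAM.
pose cand L := [&& A \subset L, 3 <= #|L| & rk M L == 2].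
have cA : cand A.
  rewrite /cand subxx hA /= eqn_leq; apply/andP; split.
    rewrite /rk; apply/bigmax_leqP => B /andP[hB hBA].
    have hne : B != A by apply: contraNneq hAM => <-.
    have : B \proper A by rewrite properEneq hne hBA.
    by move/proper_card; rewrite hA.
  have : 0 < #|A| by rewrite hA.
  case/card_gt0P => a ha.
  have h2 : #|A :\ a| = 2.
    by have := cardsD1 a A; rewrite ha hA add1n => -[].
  rewrite -{1}h2 /rk; apply: (leq_bigmax_cond (F:=fun B => #|B|)).
  by rewrite subD1set andbT; apply: small_in pM _; rewrite h2.
case: (arg_maxnP (fun L => #|L|) cA) => L cL hmax.
exists L; case/and3P: cL => hAL h3 hr; rewrite hAL andbT /is_line h3 hr /=.
apply/forallP=> L'; apply/implyP=> /andP[hp h3']; apply/negP=> hr'.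
have cL' : cand L'.
  by rewrite /cand h3' hr' andbT (subset_trans hAL (proper_sub hp)).
have h1 := hmax L' cL'; have h0 := proper_card hp.
by move: (leq_ltn_trans h1 h0); rewrite ltnn.
Qed.

Lemma le_cond M x N : plc M -> Mx_cond M x N -> dle M N.
Proof.
move=> pM /and3P[pN /forallP hl _]; apply/subsetP=> A; rewrite !inE /dependent => hA.
case: (ltnP #|A| 3) => h.
  by rewrite (small_in pM h) in hA.
case: (ltnP 3 #|A|) => h'.
  by apply/negP=> hAN; have := big_out pN hAN; rewrite leqNgt h'.
have e3 : #|A| = 3 by apply/eqP; rewrite eqn_leq h h'.
case: (line_exists pM e3 hA) => L /andP[hL hAL].
by move: (forallP (hl L) A); rewrite hL hAL e3 eqxx => /implyP; apply.
Qed.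

Lemma partI M x N : #|x| = 3 -> plc N -> dle M N ->
  (dle (Mx M x) N <-> x \in circuits_k N 3).
Proof.
move=> hx pN hMN.
have hx2 : 2 < #|x| by rewrite hx.
have [hc hl] := MxP M hx2.
split => [hle | hxN].
  apply: circ3 pN hx _; case/and3P: hc => _ _ hdx.
  by move: (subsetP hle x); rewrite !inE; apply.
apply: hl; apply/and3P; split=> //.
  apply/forallP=> L; apply/forallP=> T; apply/implyP=> /and3P[hL hT /eqP h3].
  have hd := line_dep hL hT h3.
  by move: (subsetP hMN T); rewrite !inE; apply.
by case/circ_dep: hxN.
Qed.

Lemma deps_inj I1 I2 : dle I1 I2 -> dle I2 I1 -> I1 = I2.
Proof.
move=> h1 h2; apply/setP=> A; move: (subsetP h1 A) (subsetP h2 A).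
rewrite !inE /dependent => H1 H2.
by apply/idP/idP; apply: contraLR.
Qed.

End S.

Theorem mainTheorem7 (d : nat) (M : {set {set 'I_d}}) :
  plc M -> mrank M = 3 ->
  (* (i) *)
  (forall (x : {set 'I_d}), #|x| = 3 -> x \notin circuits_k M 3 ->
     forall N : {set {set 'I_d}}, plc N -> dle M N ->
       (dle (Mx M x) N <-> x \in circuits_k N 3)) /\
  (* (ii) : x_1, ..., x_n are xs 0, ..., xs (n-1) *)
  (forall (n : nat) (xs : nat -> {set 'I_d}), 0 < n ->
     (forall i, i < n -> #|xs i| = 3 /\ xs i \notin circuits_k M 3) ->
     (forall i, i < n -> xs (i.+1 %% n) \in circuits_k (Mx M (xs i)) 3) ->
     (forall y, y \in circuits_k (Mx M (xs n.-1)) 3 ->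
        y \in circuits_k M 3 \/ exists2 i, i < n & y = xs i) ->
     in_B M (Mx M (xs n.-1)) /\
     (forall N : {set {set 'I_d}}, in_B M N -> dle N (Mx M (xs n.-1)) ->
        N = Mx M (xs n.-1))).
Proof.
move=> pM rM; split.
  move=> x hx _ N pN hMN; exact: partI.
move=> n xs hn hxs hcyc hcl.
have hlt : n.-1 < n by rewrite ltn_predL.
have [hX3 hXc] := hxs _ hlt.
have hx2 : 2 < #|xs n.-1| by rewrite hX3.
have [hc hl] := MxP M hx2.
case/and3P: (hc) => pMn _ hdX.
have dMn := le_cond pM hc.
have hXM : xs n.-1 \in M.
  apply/negPn/negP => hd; apply: (negP hXc); exact: circ3 pM hX3 hd.
split.
  case/and4P: (pMn) => m c1 c2 _; rewrite /in_B m c1 c2 /dlt dMn /= !andbT.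
  apply/eqP => e; move: hdX; rewrite /dependent -e hXM; done.
move=> N /and4P[mN /andP[hMN hne] c1 c2] hNM.
have subNM : forall A, A \in N -> A \in M.
  move=> A; move: (subsetP hMN A); rewrite !inE /dependent => H; apply: contraLR H.
have pN : plc N.
  apply/and4P; split=> //; rewrite /mrank /rk; apply/bigmax_leqP => B /andP[hB _].
  exact: big_out pM (subNM _ hB).
have : M :\: N != set0.
  apply: contra hne; rewrite setD_eq0 => hs; rewrite eqEsubset hs /=.
  by apply/subsetP => A; exact: subNM.
case/set0Pn => A; rewrite inE => /andP[hAN hAM].
have hA3 : #|A| = 3.
  apply/eqP; rewrite eqn_leq (big_out pM hAM) /=; rewrite ltnNge; apply: contra hAN.
  move=> h; exact: small_in pN h.
have hAMn : dependent (Mx M (xs n.-1)) A.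
  by move: (subsetP hNM A); rewrite !inE; apply.
case: (hcl A (circ3 pMn hA3 hAMn)) => [/circ_dep [hd _] | [i hi eA]].
  by move: hd; rewrite /dependent hAM.
pose P j := xs j \in circuits_k N 3.
have step : forall j, j < n -> P j -> P (j.+1 %% n).
  move=> j hj hPj; have [hj3 _] := hxs j hj.
  have hle : dle (Mx M (xs j)) N by apply: (proj2 (partI hj3 pN hMN)).
  case/circ_dep: (hcyc j hj) => hd h3; apply: circ3 pN h3 _.
  by move: (subsetP hle (xs (j.+1 %% n))); rewrite !inE; apply.
have iter : forall k, P ((i + k) %% n).
  elim=> [|k IH].
    by rewrite addn0 modn_small // /P -eA; apply: circ3 pN hA3 _.
  have e : ((i + k) %% n).+1 %% n = (i + k.+1) %% n.
    by rewrite addnS -addn1 modnDml addn1.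
  by rewrite -e; apply: step (ltn_pmod _ hn) IH.
have hin : i <= n.-1 by rewrite -ltnS prednK.
have := iter (n.-1 - i); rewrite subnKC // modn_small // => hP.
have hle : dle (Mx M (xs n.-1)) N by apply: (proj2 (partI hX3 pN hMN)).
exact: deps_inj.
Qed.
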